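(* Let $R$ be a finite commutative ring with identity and let $\mathfrak{m}$ be a maximal ideal of $R$ of maximum size among all maximal ideals. If $R/\mathfrak{m}$ has characteristic $2$, then $$\chi\big(\mathrm{Reg}(\Gamma(R))\big)=\omega\big(\mathrm{Reg}(\Gamma(R))\big)=\frac{|\mathrm{Reg}(R)|}{|R/\mathfrak{m}|-1}.$$
   Context: $Z(R)$ is the set of zero-divisors of $R$ (including $0$) and $\mathrm{Reg}(R)=R\setminus Z(R)$ is the set of regular elements. The total graph $T(\Gamma(R))$ is the simple graph with vertex set $R$ in which distinct $x,y$ are adjacent iff $x+y\in Z(R)$; $\mathrm{Reg}(\Gamma(R))$ is its induced subgraph on $\mathrm{Reg}(R)$. $\chi$ and $\omega$ denote chromatic and clique number. *)

(* Defs.v *)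
From mathcomp Require Import all_boot all_order all_algebra.
Set Implicit Arguments. Unset Strict Implicit. Unset Printing Implicit Defensive.
Import GRing.Theory.
Local Open Scope ring_scope.

Section Defs.
Variable R : finComNzRingType.

Definition is_ideal (I : {set R}) : Prop :=
  [/\ (0 : R) \in I,
      (forall x y, x \in I -> y \in I -> x + y \in I) &
      (forall r x, x \in I -> r * x \in I)].

Definition is_maximal_ideal (M : {set R}) : Prop :=
  [/\ is_ideal M, (1 : R) \notin M &
      forall J : {set R}, is_ideal J -> M \subset J -> J = M \/ (1 : R) \in J].

(* the quotient R/M, realized as the set of cosets x + M *)
Definition quot_cosets (M : {set R}) : {set {set R}} :=
  [set [set x + y | y in M] | x : R].

(* characteristic of R/M is p: p is the least positive n with n*1 = 0 in R/M,
   i.e. n%:R \in M *)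
Definition quot_char (M : {set R}) (p : nat) : Prop :=
  (0 < p)%N /\ (p%:R : R) \in M /\ forall n, (0 < n)%N -> (n%:R : R) \in M -> (p <= n)%N.

(* zero-divisors, including 0 *)
Definition zero_divisors : {set R} := [set x | [exists y : R, (y != 0) && (x * y == 0)]].
Definition regulars : {set R} := ~: zero_divisors.

(* Reg(Gamma(R)): vertex set regulars, x ~ y iff x != y and x + y in Z(R) *)
Definition reg_adj (x y : R) : bool := (x != y) && (x + y \in zero_divisors).

Definition proper_coloring (k : nat) (c : R -> nat) : Prop :=
  (forall x, x \in regulars -> (c x < k)%N) /\
  (forall x y, x \in regulars -> y \in regulars -> reg_adj x y -> c x != c y).

Definition colorable (k : nat) : Prop := exists c, proper_coloring k c.

Definition is_chromatic_number (n : nat) : Prop :=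
  colorable n /\ forall k, colorable k -> (n <= k)%N.

Definition is_clique (S : {set R}) : Prop :=
  S \subset regulars /\ forall x y, x \in S -> y \in S -> x != y -> reg_adj x y.

Definition is_clique_number (n : nat) : Prop :=
  (exists S, is_clique S /\ #|S| = n) /\ forall S, is_clique S -> (#|S| <= n)%N.

End Defs.

(* Main.v *)
Require Import Defs.
From mathcomp Require Import all_boot all_order all_algebra.
From mathcomp Require Import ring zify.
From Stdlib Require Import ClassicalEpsilon.
Set Implicit Arguments. Unset Strict Implicit. Unset Printing Implicit Defensive.
Import GRing.Theory.
Local Open Scope ring_scope.

Definition bP (P : Prop) : bool := if excluded_middle_informative P then true else false.
Lemma bPE (P : Prop) : bP P <-> P.
Proof. by rewrite /bP; case: excluded_middle_informative => h; split. Qed.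

Section Main.
Variable R : finComNzRingType.
Implicit Types (x y z : R) (M N : {set R}).

Lemma idealN M x : is_ideal M -> x \in M -> - x \in M.
Proof. case=> _ _ hm hx. by rewrite -mulN1r hm. Qed.
Lemma idealD M x y : is_ideal M -> x \in M -> y \in M -> x + y \in M.
Proof. by case=> _ hD _; apply: hD. Qed.
Lemma idealB M x y : is_ideal M -> x \in M -> y \in M -> x - y \in M.
Proof. move=> hI hx hy; exact: idealD hI hx (idealN hI hy). Qed.
Lemma idealMr M x r : is_ideal M -> x \in M -> x * r \in M.
Proof. case=> _ _ hm hx; rewrite mulrC; exact: hm. Qed.
Lemma idealMl M x r : is_ideal M -> x \in M -> r * x \in M.
Proof. case=> _ _ hm hx; exact: hm. Qed.
Lemma ideal0 M : is_ideal M -> 0 \in M. Proof. by case. Qed.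
Lemma idealDr M x y : is_ideal M -> y \in M -> (x + y \in M) = (x \in M).
Proof.
move=> hI hy; apply/idP/idP => h; last exact: idealD.
by have := idealB hI h hy; rewrite addrK.
Qed.

Definition inv x : R := odflt 0 [pick y | x * y == 1].

Lemma regularP x : reflect (exists y, x * y = 1) (x \in regulars R).
Proof.
rewrite /regulars in_setC /zero_divisors inE.
apply: (iffP idP).
- move=> /existsPn H.
  have inj : injective (fun y => x * y).
    move=> y z /eqP; rewrite -subr_eq0 -mulrBr => /eqP e.
    apply/eqP; rewrite -subr_eq0; apply/negPn/negP => ne.
    by move: (H (y - z)); rewrite ne e eqxx.
  have [g _ fg] := injF_bij inj. by exists (g 1); exact: fg.
- case=> y xy; apply/existsP => -[w /andP [nz /eqP xz]].
  move/negP: nz; apply; apply/eqP.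
  by rewrite -[w]mul1r -xy mulrAC xz mul0r.
Qed.

Lemma invP x : x \in regulars R -> x * inv x = 1.
Proof.
move/regularP=> [y xy]; rewrite /inv; case: pickP => [w /eqP //|/(_ y)].
by rewrite xy eqxx.
Qed.

Lemma inv_reg x : x \in regulars R -> inv x \in regulars R.
Proof. by move=> h; apply/regularP; exists x; rewrite mulrC invP. Qed.

Lemma regM x y : x \in regulars R -> y \in regulars R -> x * y \in regulars R.
Proof.
move=> hx hy; apply/regularP; exists (inv x * inv y).
by rewrite mulrACA invP // invP // mulr1.
Qed.

Lemma zdE z : (z \in zero_divisors R) = (z \notin regulars R).
Proof. by rewrite /regulars in_setC negbK. Qed.

Lemma max_nreg M x : is_maximal_ideal M -> x \in M -> x \notin regulars R.
Proof.
case=> hI h1 _ hx; apply/regularP => -[y xy]; move/negP: h1; apply.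
by rewrite -xy idealMr.
Qed.

Lemma nreg_max x : x \notin regulars R -> exists M, is_maximal_ideal M /\ x \in M.
Proof.
move=> hx.
set I := [set x * r | r : R].
have hI : is_ideal I.
  split.
  - by apply/imsetP; exists 0; rewrite ?inE ?mulr0.
  - move=> a b /imsetP[r _ ->] /imsetP[s _ ->]; apply/imsetP; exists (r + s);
      by rewrite ?inE ?mulrDr.
  - move=> t a /imsetP[r _ ->]; apply/imsetP; exists (t * r); rewrite ?inE //.
    by rewrite mulrCA.
have h1 : (1 : R) \notin I.
  apply/negP => /imsetP[r _ e]; move/negP: hx; apply; apply/regularP.
  by exists r.
pose P J := bP (is_ideal J /\ (1 : R) \notin J /\ I \subset J).
have PI : P I by apply/bPE; split; [|split].
case: (@arg_maxnP _ I P (fun J => #|J|) PI) => J /bPE [hJ [h1J hIJ]] Jmax.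
exists J; split; last first.
  by apply: (subsetP hIJ); apply/imsetP; exists 1; rewrite ?inE ?mulr1.
split => // J' hJ' hJJ'.
case h1' : ((1 : R) \in J'); [by right|left].
have PJ' : P J'.
  by apply/bPE; split => //; split; [rewrite h1'|exact: subset_trans hJJ'].
have := Jmax _ PJ' => hc.
apply/eqP; rewrite eq_sym eqEcard hJJ' /=; exact: hc.
Qed.

Lemma reg_of_max x : (forall N, is_maximal_ideal N -> x \notin N) -> x \in regulars R.
Proof.
move=> h; apply/negPn/negP => /nreg_max [N [hN hx]].
by move: (h N hN); rewrite hx.
Qed.


Lemma notin_add M u v : is_ideal M -> u \notin M -> v \in M -> u + v \notin M.
Proof. by move=> hI hu hv; rewrite idealDr. Qed.

Lemma comax M N : is_maximal_ideal M -> is_maximal_ideal N -> M != N ->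
  exists a b, [/\ a \in M, b \in N & a + b = 1].
Proof.
move=> hM hN nMN; case: (hM) => hIM h1M mM; case: (hN) => hIN h1N mN.
set J := [set a + b | a in M, b in N].
have hJ : is_ideal J.
  split.
  - apply/imset2P; exists 0 0; [exact: (ideal0 hIM)|exact: (ideal0 hIN)|by rewrite addr0].
  - move=> u v /imset2P[a b ha hb ->] /imset2P[a' b' ha' hb' ->].
    apply/imset2P; exists (a + a') (b + b'); [exact: idealD|exact: idealD|].
    by rewrite addrACA.
  - move=> r u /imset2P[a b ha hb ->]; apply/imset2P; exists (r * a) (r * b);
      [exact: idealMl|exact: idealMl|by rewrite mulrDr].
have MJ : M \subset J.
  apply/subsetP => a ha; apply/imset2P; exists a 0 => //; last by rewrite addr0.
  exact: (ideal0 hIN).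
case: (mM J hJ MJ) => [JM|/imset2P[a b ha hb e]]; last by exists a, b.
have NM : N \subset M.
  rewrite -JM; apply/subsetP => b hb; apply/imset2P; exists 0 b => //; last by rewrite add0r.
  exact: (ideal0 hIM).
case: (mN M hIM NM) => [e|h]; first by rewrite e eqxx in nMN.
by rewrite h in h1M.
Qed.

Definition Max : {set {set R}} := [set M | bP (is_maximal_ideal M)].
Lemma inMax M : (M \in Max) <-> is_maximal_ideal M.
Proof. by rewrite inE; exact: bPE. Qed.

Definition bsel M N : R := odflt 0 [pick b | (b \in N) && (1 - b \in M)].
Lemma bselP M N : M \in Max -> N \in Max -> M != N -> bsel M N \in N /\ 1 - bsel M N \in M.
Proof.
move=> /inMax hM /inMax hN nMN; have [a [b [ha hb e]]] := comax hM hN nMN.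
rewrite /bsel; case: pickP => [w /andP[-> ->] //|/(_ b)].
by rewrite hb -e addrK ha.
Qed.

Definition e M : R := \prod_(N in Max | N != M) bsel M N.

Lemma e1 M : M \in Max -> e M - 1 \in M.
Proof.
move=> hM; have [hI _ _] := (iffLR (inMax M) hM).
apply: (big_ind (fun x => x - 1 \in M)).
- by rewrite subrr ideal0.
- move=> x y hx hy; have -> : x * y - 1 = (x - 1) * y + (y - 1) by ring.
  by apply: idealD => //; apply: idealMr.
- move=> N /andP[hN nNM]; have nMN : M != N by rewrite eq_sym.
  have [_ hb] := bselP hM hN nMN.
  have -> : bsel M N - 1 = - (1 - bsel M N) by ring.
  exact: idealN.
Qed.

Lemma e0 M N : M \in Max -> N \in Max -> N != M -> e M \in N.
Proof.
move=> hM hN nNM; have [hI _ _] := (iffLR (inMax N) hN).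
rewrite /e (bigD1 N) /=; last by rewrite hN nNM.
have nMN : M != N by rewrite eq_sym.
by apply: idealMr => //; case: (bselP hM hN nMN).
Qed.

Lemma crt (c : {set R} -> R) N : N \in Max ->
  (\sum_(M in Max) c M * e M) - c N \in N.
Proof.
move=> hN; have [hI _ _] := (iffLR (inMax N) hN).
rewrite (bigD1 N) //= addrAC; apply: idealD => //.
  have -> : c N * e N - c N = c N * (e N - 1) by ring.
  by apply: idealMl => //; exact: e1.
apply: (big_ind (fun x => x \in N)); [exact: ideal0|by move=> x y; apply: idealD|].
move=> M /andP[hM nMN]; apply: idealMl => //; apply: e0 => //; by rewrite eq_sym.
Qed.

Definition cos M x : {set R} := [set x + y | y in M].

Lemma mem_cos M x z : is_ideal M -> (z \in cos M x) = (z - x \in M).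
Proof.
move=> hI; apply/imsetP/idP => [[y hy ->]|h].
  by have -> : x + y - x = y by ring.
by exists (z - x) => //; rewrite addrC subrK.
Qed.

Lemma cos_eq M x y : is_ideal M -> (cos M x == cos M y) = (x - y \in M).
Proof.
move=> hI; apply/eqP/idP => [e|h].
  have : x \in cos M x by rewrite mem_cos // subrr ideal0.
  by rewrite e mem_cos.
apply/setP => z; rewrite !mem_cos //.
have -> : z - y = (z - x) + (x - y) by ring.
by rewrite (idealDr _ hI h).
Qed.

Lemma cos0 M : is_ideal M -> cos M 0 = M.
Proof. by move=> hI; apply/setP => z; rewrite mem_cos // subr0. Qed.

Lemma quotE M : quot_cosets M = [set cos M x | x : R].
Proof. by []. Qed.

Lemma card_quot M : is_ideal M -> #|[set: R]| = (#|quot_cosets M| * #|M|)%N.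
Proof.
move=> hI; apply: card_uniform_partition.
  move=> C; rewrite quotE => /imsetP[x _ ->].
  rewrite card_in_imset //; move=> a b _ _; exact: addrI.
apply/and3P; split.
- apply/eqP/setP => z; rewrite in_setT; apply/bigcupP; exists (cos M z).
    by rewrite quotE; apply/imsetP; exists z.
  by rewrite mem_cos // subrr ideal0.
- apply/trivIsetP => A B; rewrite !quotE => /imsetP[x _ ->] /imsetP[y _ ->] nAB.
  rewrite -setI_eq0; apply/eqP/setP => z; rewrite inE in_set0.
  apply/negP => /andP[]; rewrite !mem_cos // => hx hy.
  move/negP: nAB; apply; rewrite cos_eq //.
  have -> : x - y = (z - y) - (z - x) by ring.
  exact: idealB.
- rewrite quotE; apply/negP => /imsetP[x _ e].
  have : x \in cos M x by rewrite mem_cos // subrr ideal0.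
  by rewrite -e in_set0.
Qed.

Definition rep (C : {set R}) : R := odflt 0 [pick x in C].

Lemma rep_in M C : is_ideal M -> C \in quot_cosets M -> rep C \in C /\ C = cos M (rep C).
Proof.
move=> hI; rewrite quotE => /imsetP[x _ ->].
have hx : x \in cos M x by rewrite mem_cos // subrr ideal0.
rewrite /rep; case: pickP => [w hw|/(_ x)]; last by rewrite hx.
split => //; apply/eqP; rewrite cos_eq //.
by rewrite mem_cos // in hw; rewrite -opprB idealN.
Qed.

Definition Aset M : {set R} := rep @: (quot_cosets M :\ M).

Lemma Aset_props M : is_ideal M -> (1 : R) \notin M ->
 [/\ (forall a, a \in Aset M -> a \notin M),
     (forall a b, a \in Aset M -> b \in Aset M -> a - b \in M -> a = b),
     (forall x, x \notin M -> exists2 a, a \in Aset M & x - a \in M) &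
     #|Aset M| = (#|quot_cosets M| - 1)%N ].
Proof.
move=> hI h1.
have Mq : M \in quot_cosets M by rewrite quotE; apply/imsetP; exists 0; rewrite ?cos0.
have repinj : {in quot_cosets M :\ M &, injective rep}.
  move=> C C' /setD1P[_ hC] /setD1P[_ hC'] e.
  by rewrite (proj2 (rep_in hI hC)) (proj2 (rep_in hI hC')) e.
split.
- move=> a /imsetP[C /setD1P[nCM hC] ->]; apply/negP => ha.
  have [_ eC] := rep_in hI hC.
  have : cos M (rep C) == cos M 0 by rewrite cos_eq // subr0.
  by rewrite -eC cos0 // (negbTE nCM).
- move=> a b /imsetP[C /setD1P[_ hC] ->] /imsetP[C' /setD1P[_ hC'] ->] hab.
  have [_ eC] := rep_in hI hC; have [_ eC'] := rep_in hI hC'.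
  have : C == C' by rewrite eC eC' cos_eq.
  by move/eqP ->.
- move=> x hx.
  have hC : cos M x \in quot_cosets M :\ M.
    apply/setD1P; split; last by rewrite quotE; apply/imsetP; exists x.
    apply/negP => /eqP e; move/negP: hx; apply.
    have : x \in cos M x by rewrite mem_cos // subrr ideal0.
    by rewrite e.
  exists (rep (cos M x)); first by apply/imsetP; exists (cos M x).
  have [h _] := rep_in hI (setD1P hC).2.
  by rewrite mem_cos // in h; rewrite -opprB idealN.
- by rewrite card_in_imset // (cardsD1 M (quot_cosets M)) Mq add1n subn1.
Qed.

Definition injf (A B : {set R}) x := nth 0 (enum B) (index x (enum A)).

Lemma injfP (A B : {set R}) : (#|A| <= #|B|)%N ->
  (forall x, x \in A -> injf A B x \in B) /\ {in A &, injective (injf A B)}.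
Proof.
move=> hAB.
have hi : forall x, x \in A -> (index x (enum A) < size (enum B))%N.
  move=> x hx; rewrite -cardE; apply: (leq_trans _ hAB).
  by rewrite cardE index_mem mem_enum.
split.
  by move=> x hx; rewrite -mem_enum; apply: mem_nth; exact: hi.
move=> x y hx hy e.
move/eqP: e; rewrite /injf nth_uniq ?hi ?enum_uniq // => /eqP e.
have hx' : x \in enum A by rewrite mem_enum.
have hy' : y \in enum A by rewrite mem_enum.
by rewrite -(nth_index 0 hx') -(nth_index 0 hy') e.
Qed.

Lemma clique_le (S : {set R}) k (c' : R -> nat) : is_clique S -> proper_coloring k c' -> (#|S| <= k)%N.
Proof.
case=> hS hadj [hlt hpr].
have hu : uniq (map c' (enum S)).
  rewrite map_inj_in_uniq ?enum_uniq // => x y; rewrite !mem_enum => hx hy e.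
  apply/eqP; apply: contraT => nxy.
  have := hpr x y (subsetP hS _ hx) (subsetP hS _ hy) (hadj x y hx hy nxy).
  by rewrite e eqxx.
have := uniq_leq_size hu (s2 := iota 0 k).
rewrite size_map size_iota -cardE; apply.
move=> i /mapP[x hx ->]; rewrite mem_iota add0n /=.
by apply: hlt; apply: (subsetP hS); rewrite -mem_enum.
Qed.

Section Fixed.
Variable m : {set R}.
Hypothesis mmax : is_maximal_ideal m.
Hypothesis mbig : forall m' : {set R}, is_maximal_ideal m' -> (#|m'| <= #|m|)%N.
Hypothesis two : (2%:R : R) \in m.

Let hIm : is_ideal m. Proof. by case: mmax. Qed.
Let h1m : (1 : R) \notin m. Proof. by case: mmax. Qed.
Let mMax : m \in Max. Proof. exact/inMax. Qed.

Definition A := Aset m.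

Lemma AsizeN N : N \in Max -> (#|A| <= #|Aset N|)%N.
Proof.
move=> /inMax hN; have [hIN h1N _] := hN.
have [_ _ _ ->] := Aset_props hIm h1m.
have [_ _ _ ->] := Aset_props hIN h1N.
have e1 := card_quot hIm; have e2 := card_quot hIN.
have hb := mbig hN.
have hm0 : (0 < #|m|)%N by apply/card_gt0P; exists 0; exact: ideal0.
have : (#|quot_cosets m| <= #|quot_cosets N|)%N.
  rewrite leqNgt; apply/negP => hlt.
  have : (#|quot_cosets N| * #|N| < #|quot_cosets m| * #|m|)%N.
    apply: (leq_ltn_trans (leq_mul (leqnn _) hb)).
    by rewrite ltn_pmul2r.
  by rewrite -e1 -e2 ltnn.
move=> h; exact: leq_sub2r.
Qed.

Definition cc N a : R :=
  if N == m then a else if (2%:R : R) \in N then injf A (Aset N) a else 1.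

Definition h a : R := \sum_(N in Max) cc N a * e N.

Lemma cc_ok N a : N \in Max -> a \in A -> cc N a \notin N.
Proof.
move=> hN ha; have [hIN h1N _] := iffLR (inMax N) hN.
rewrite /cc; case: eqP => [->|_]; first by have [P1 _ _ _] := Aset_props hIm h1m; exact: P1.
case: ifP => // _.
have [P1 _ _ _] := Aset_props hIN h1N; apply: P1.
by have [P _] := injfP (AsizeN hN); exact: P.
Qed.

Lemma cc_sum N a b : N \in Max -> a \in A -> b \in A -> a != b -> cc N a + cc N b \notin N.
Proof.
move=> hN ha hb nab; have [hIN h1N _] := iffLR (inMax N) hN.
have key : forall u v, u - v \notin N -> (2%:R : R) \in N -> u + v \notin N.
  move=> u v huv h2; have -> : u + v = (u - v) + 2%:R * v by ring.
  by apply: notin_add => //; apply: idealMr.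
rewrite /cc; case: eqP => [eN|_].
  subst N; apply: key => //; apply/negP => hab; have [_ P2 _ _] := Aset_props hIm h1m.
  by move/eqP: nab; apply; exact: P2.
case: ifP => h2.
  have [P Pi] := injfP (AsizeN hN); apply: key => //; apply/negP => hab.
  have [_ P2 _ _] := Aset_props hIN h1N.
  by move/eqP: nab; apply; apply: Pi => //; apply: P2 => //; apply: P.
by have -> : (1 : R) + 1 = 2%:R by []; rewrite h2.
Qed.

Lemma h_mod N a : N \in Max -> h a - cc N a \in N.
Proof. by move=> hN; apply: (crt (fun N => cc N a)). Qed.

Lemma h_reg a : a \in A -> h a \in regulars R.
Proof.
move=> ha; apply: reg_of_max => N hN; have hN' := iffRL (inMax N) hN.
have [hIN _ _] := hN; apply/negP => hx.
move/negP: (cc_ok hN' ha); apply.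
have -> : cc N a = h a - (h a - cc N a) by ring.
by apply: idealB => //; exact: h_mod.
Qed.

Lemma h_sum a b : a \in A -> b \in A -> a != b -> h a + h b \in regulars R.
Proof.
move=> ha hb nab; apply: reg_of_max => N hN; have hN' := iffRL (inMax N) hN.
have [hIN _ _] := hN; apply/negP => hx.
move/negP: (cc_sum hN' ha hb nab); apply.
have -> : cc N a + cc N b = (h a + h b) - (h a - cc N a) - (h b - cc N b) by ring.
by apply: idealB => //; [apply: idealB|]; rewrite ?h_mod.
Qed.

Lemma h_m a : h a - a \in m.
Proof. by have := h_mod a mMax; rewrite /cc eqxx. Qed.

Definition K1 : {set R} := [set k in regulars R | k - 1 \in m].

Definition dec u : R := odflt 0 [pick a in A | u - a \in m].
Definition kk u : R := u * inv (h (dec u)).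

Lemma dec_ok u : u \in regulars R -> dec u \in A /\ u - dec u \in m.
Proof.
move=> hu.
have hum : u \notin m by apply/negP => hm; move: (max_nreg mmax hm); rewrite hu.
have [_ _ P3 _] := Aset_props hIm h1m; have [a ha hua] := P3 u hum.
rewrite /dec; case: pickP => [w /andP[hw hw'] //|/(_ a)].
by rewrite ha hua.
Qed.

Lemma hk_m a k : k \in K1 -> h a * k - a \in m.
Proof.
rewrite inE => /andP[_ hk].
have -> : h a * k - a = (h a - a) * k + a * (k - 1) by ring.
by apply: idealD => //; [apply: idealMr => //; exact: h_m|apply: idealMl].
Qed.

Lemma kk_ok u : u \in regulars R -> kk u \in K1 /\ h (dec u) * kk u = u.
Proof.
move=> hu; have [ha hua] := dec_ok hu.
have hr := h_reg ha; have hv := invP hr.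
split; last by rewrite /kk mulrCA hv mulr1.
rewrite inE /kk regM ?inv_reg //=.
have -> : u * inv (h (dec u)) - 1 = (u - h (dec u)) * inv (h (dec u)) by rewrite mulrBl hv.
apply: idealMr => //.
have -> : u - h (dec u) = (u - dec u) - (h (dec u) - dec u) by ring.
by apply: idealB => //; exact: h_m.
Qed.

Lemma K1_clique : is_clique K1.
Proof.
split; first by apply/subsetP => x; rewrite inE => /andP[].
move=> x y; rewrite !inE => /andP[_ hx] /andP[_ hy] nxy.
rewrite /reg_adj nxy zdE /=; apply: (max_nreg mmax).
have -> : x + y = (x - 1) + (y - 1) + 2%:R by rewrite -[2%:R]/(1 + 1 : R); ring.
by apply: idealD => //; apply: idealD.
Qed.

Definition col u : nat := index (kk u) (enum K1).

Lemma col_ok : proper_coloring #|K1| col.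
Proof.
split.
  move=> x hx; rewrite /col cardE index_mem mem_enum; exact: (kk_ok hx).1.
move=> x y hx hy /andP[nxy]; rewrite zdE => hxy; apply/negP => /eqP ce.
have [kx ex] := kk_ok hx; have [ky ey] := kk_ok hy.
have ekk : kk x = kk y.
  have hx' : kk x \in enum K1 by rewrite mem_enum.
  have hy' : kk y \in enum K1 by rewrite mem_enum.
  by rewrite -(nth_index 0 hx') -(nth_index 0 hy'); congr nth.
have [ha _] := dec_ok hx; have [hb _] := dec_ok hy.
case: (eqVneq (dec x) (dec y)) => [ed|nd].
  by move/eqP: nxy; apply; rewrite -ex -ey ed ekk.
move/negP: hxy; apply.
have -> : x + y = (h (dec x) + h (dec y)) * kk x by rewrite mulrDl ex ekk ey.
apply: regM; first exact: h_sum.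
by move: kx; rewrite inE => /andP[].
Qed.

Lemma card_reg : #|regulars R| = (#|A| * #|K1|)%N.
Proof.
pose phi (p : R * R) := h p.1 * p.2.
have -> : regulars R = phi @: setX A K1.
  apply/setP => u; apply/idP/imsetP => [hu|[[a k] /setXP[ha hk] ->]].
    exists (dec u, kk u); last by rewrite /phi /= (kk_ok hu).2.
    by apply/setXP; split; [exact: (dec_ok hu).1|exact: (kk_ok hu).1].
  apply: regM; first exact: h_reg.
  by move: hk; rewrite inE => /andP[].
rewrite card_in_imset ?cardsX //.
move=> [a k] [b k'] /setXP[ha hk] /setXP[hb hk']; rewrite /phi /= => e.
have eab : a = b.
  have [_ P2 _ _] := Aset_props hIm h1m; apply: P2 => //.
  have := idealB hIm (hk_m b hk') (hk_m a hk); rewrite -e.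
  by have -> : h a * k - b - (h a * k - a) = a - b by ring.
subst b; congr (_, _).
have hi : inv (h a) * h a = 1 by rewrite mulrC invP // h_reg.
by rewrite -[k]mul1r -hi -mulrA e mulrA hi mul1r.
Qed.

End Fixed.
End Main.
Unset Implicit Arguments.

Theorem theorem20 (R : finComNzRingType) (m : {set R}) :
  is_maximal_ideal m ->
  (forall m' : {set R}, is_maximal_ideal m' -> (#|m'| <= #|m|)%N) ->
  quot_char m 2 ->
  let q := #|quot_cosets m| in
  let n := (#|regulars R| %/ (q - 1))%N in
  #|regulars R| = (n * (q - 1))%N /\
  is_chromatic_number R n /\ is_clique_number R n.
Proof.
move=> hmax hbig [_ [two _]] q n.
have [hIm h1m _] := hmax.
have [_ _ P3 hA] := Aset_props hIm h1m.
have hpos : (0 < #|A m|)%N.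
  have [a ha _] := P3 1 h1m; apply/card_gt0P; by exists a.
have hreg := card_reg hmax hbig.
have hn : n = #|K1 m| by rewrite /n hreg /A -/q -hA mulKn.
rewrite hn hreg mulnC /A hA; split => //.
split; split.
- by exists (col m); exact: col_ok.
- move=> k [c hc]; exact: clique_le (K1_clique hmax two) hc.
- by exists (K1 m); split => //; exact: K1_clique.
- move=> S hS; exact: clique_le hS (col_ok hmax hbig two).
Qed.
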